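(* Assume the setup in the context, with the fine-tuning regime and local smoothness with radius $r\ge 2\sqrt{C}$, and let $0<\epsilon\le 1$ be such that $|\langle\tau_i,\tau_j\rangle|\le\epsilon\|\tau_i\|\|\tau_j\|$ for all $i\neq j$. Let $\mathbf{W}_e\in\mathbb{R}^{T\times M}$ have every column in the probability simplex $\Delta^{T-1}$, define basis vectors $B_m=\sum_{j=1}^T\mathbf{W}_e[j,m]\tau_j$ for $m\in[M]$, let $\alpha\in\Delta^{M-1}$, and set $\theta^M_{\mathrm{Add}}=\theta_0+\sum_{m=1}^M\alpha_mB_m$. Then for every $i\in[T]$, $$\mathcal{L}_i(\theta^M_{\mathrm{Add}})-\mathcal{L}_i(\theta_i)\le L_iC(1+\epsilon).$$
   Context: Setup: $\theta_0\in\mathbb{R}^d$ is a pretrained parameter vector; $\theta_1,\dots,\theta_T\in\mathbb{R}^d$ are fine-tuned parameters and $\tau_i:=\theta_i-\theta_0$ are task vectors. For each task $i$, $\mathcal{L}_i:\mathbb{R}^d\to\mathbb{R}$ is a differentiable loss (population risk). Norms are Euclidean. Fine-tuning regime: $\nabla\mathcal{L}_i(\theta_i)=0$ for all $i\in[T]$, and there is $C>0$ with $\|\tau_i\|^2\le C$ for all $i$. Local smoothness with radius $r>0$: for each $i$ there is $L_i\ge 0$ such that for all $\theta$ with $\|\theta-\theta_i\|\le r$, $\big|\mathcal{L}_i(\theta)-\mathcal{L}_i(\theta_i)-\langle\theta-\theta_i,\nabla\mathcal{L}_i(\theta_i)\rangle\big|\le\frac{L_i}{2}\|\theta-\theta_i\|^2$.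 $\Delta^{K-1}=\{x\in\mathbb{R}^K: x\ge 0,\ \sum_k x_k=1\}$. *)

(* Defs.v *)
From HB Require Import structures.
From mathcomp Require Import all_boot all_order all_algebra.
From mathcomp Require Import all_classical all_reals all_analysis.
Set Implicit Arguments. Unset Strict Implicit. Unset Printing Implicit Defensive.
Import Order.TTheory GRing.Theory Num.Theory.
Local Open Scope ring_scope.

Definition dotv (R : realType) (d : nat) (u v : 'rV[R]_d) : R :=
  \sum_(k < d) u 0 k * v 0 k.
Definition enorm (R : realType) (d : nat) (u : 'rV[R]_d) : R :=
  Num.sqrt (dotv u u).

Definition in_simplex (R : realType) (K : nat) (x : 'I_K -> R) : Prop :=
  (forall k, 0 <= x k) /\ \sum_(k < K) x k = 1.

(* Main.v *)
Require Import Defs.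
From HB Require Import structures.
From mathcomp Require Import all_boot all_order all_algebra.
From mathcomp Require Import all_classical all_reals all_analysis.
From mathcomp Require Import ring lra.
Import Order.TTheory GRing.Theory Num.Theory.
Import numFieldNormedType.Exports.
Local Open Scope ring_scope.

Lemma dotvC (R : realType) d (u v : 'rV[R]_d) : dotv u v = dotv v u.
Proof. by rewrite /dotv; apply: eq_bigr => k _; rewrite mulrC. Qed.

Lemma dotvBB (R : realType) d (a b c e : 'rV[R]_d) :
  dotv (a - b) (c - e) = dotv a c - dotv a e - dotv b c + dotv b e.
Proof.
rewrite /dotv -!sumrB -big_split /=; apply: eq_bigr => k _; rewrite !mxE; ring.
Qed.

Lemma dotv_ge0 (R : realType) d (u : 'rV[R]_d) : 0 <= dotv u u.
Proof. by rewrite /dotv; apply: sumr_ge0 => k _; rewrite -expr2 sqr_ge0. Qed.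

Lemma enorm2 (R : realType) d (u : 'rV[R]_d) : enorm u ^+ 2 = dotv u u.
Proof. by rewrite /enorm sqr_sqrtr // dotv_ge0. Qed.

Lemma sq_sum_expand (R : realType) (T d : nat) (c : 'I_T -> R) (v : 'I_T -> 'rV[R]_d) :
  \sum_(k < d) (\sum_(j < T) c j * v j 0 k) ^+ 2 =
  \sum_(j < T) \sum_(l < T) c j * c l * dotv (v j) (v l).
Proof.
under eq_bigr => k _ do rewrite expr2 big_distrl /=.
under eq_bigr => k _ do under eq_bigr => j _ do rewrite big_distrr /=.
rewrite exchange_big /=; apply: eq_bigr => j _.
rewrite exchange_big /=; apply: eq_bigr => l _.
rewrite /dotv big_distrr /=; apply: eq_bigr => k _; ring.
Qed.

Arguments dotvC {R d}.
Arguments sq_sum_expand {R T d}.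

Theorem mainTheorem5 (R : realType) (d T M : nat)
  (theta0 : 'rV[R]_d) (theta : 'I_T -> 'rV[R]_d)
  (Loss : 'I_T -> 'rV[R]_d -> R)
  (C r eps : R) (Lc : 'I_T -> R)
  (W : 'M[R]_(T, M)) (alpha : 'I_M -> R) :
  (* each loss is differentiable *)
  (forall i x, differentiable (Loss i) x) ->
  (* fine-tuning regime *)
  (forall i, 'd (Loss i) (theta i) = (fun _ => 0) :> ('rV[R]_d -> R)) ->
  0 < C ->
  (forall i, enorm (theta i - theta0) ^+ 2 <= C) ->
  (* local smoothness with radius r *)
  0 < r ->
  (forall i, 0 <= Lc i) ->
  (forall i x, enorm (x - theta i) <= r ->
     `| Loss i x - Loss i (theta i) - 'd (Loss i) (theta i) (x - theta i) |
       <= Lc i / 2 * enorm (x - theta i) ^+ 2) ->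
  2 * Num.sqrt C <= r ->
  (* near-orthogonality of the task vectors *)
  0 < eps -> eps <= 1 ->
  (forall i j, i != j ->
     `| dotv (theta i - theta0) (theta j - theta0) |
       <= eps * enorm (theta i - theta0) * enorm (theta j - theta0)) ->
  (* merging weights *)
  (forall m, in_simplex (fun j => W j m)) ->
  in_simplex alpha ->
  let B := fun m : 'I_M => \sum_(j < T) W j m *: (theta j - theta0) in
  let thetaAdd := theta0 + \sum_(m < M) alpha m *: B m in
  forall i, Loss i thetaAdd - Loss i (theta i) <= Lc i * C * (1 + eps).
Proof.
move=> _ Hd C0 HC r0 HL0 Hsm Hr e0 e1 Horth HW [Ha0 Ha1] B thetaAdd i.
pose c j := \sum_(m < M) alpha m * W j m.
have c0 : forall j, 0 <= c j.
  move=> j; apply: sumr_ge0 => m _; apply: mulr_ge0 => //; exact: (HW m).1.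
have c1 : \sum_(j < T) c j = 1.
  rewrite /c exchange_big /= -Ha1; apply: eq_bigr => m _.
  by rewrite -big_distrr /= (HW m).2 mulr1.
have Hent : forall k, (thetaAdd - theta i) 0 k =
    \sum_(j < T) c j * (theta j - theta i) 0 k.
  move=> k.
  have E : forall u : R, \sum_(j < T) c j * (theta j 0 k - u) =
                         \sum_(j < T) c j * theta j 0 k - u.
    move=> u; under eq_bigr => j _ do rewrite mulrBr.
    by rewrite sumrB -big_distrl /= c1 mul1r.
  under [RHS]eq_bigr => j _ do rewrite !mxE.
  rewrite E /thetaAdd !mxE summxE.
  under eq_bigr => m _ do rewrite !mxE summxE big_distrr /=.
  rewrite exchange_big /=.
  under eq_bigr => j _ do (under eq_bigr => m _ do rewrite !mxE mulrA; rewrite -big_distrl /=).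
  rewrite -/c E; ring.
pose t j := theta j - theta0.
have Htt : forall j, dotv (t j) (t j) <= C by move=> j; rewrite -enorm2; exact: HC.
have Hn0 : forall j, 0 <= enorm (t j) by move=> j; exact: sqrtr_ge0.
have Htl : forall j l, j != l -> `|dotv (t j) (t l)| <= eps * C.
  move=> j l jl; apply: le_trans (Horth _ _ jl) _.
  have := HC j; have := HC l; have := Hn0 j; have := Hn0 l.
  rewrite -/(t j) -/(t l) -mulrA => a b c' d'.
  rewrite ler_pM2l //; nra.
have Hdiff : forall j, theta j - theta i = t j - t i.
  by move=> j; rewrite /t opprB addrA subrK.
have HD : forall j l, dotv (theta j - theta i) (theta l - theta i) <= 2 * C * (1 + eps).
  move=> j l; rewrite !Hdiff dotvBB.
  have Sym := dotvC (t j) (t i); have Sym2 := dotvC (t l) (t i).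
  have Sym3 := dotvC (t j) (t l).
  have K0 : 0 < C * eps := mulr_gt0 C0 e0.
  have := Htt i; have := Htt j; have := Htt l.
  case: (eqVneq j i) => [->|ji]; first by move=> *; lra.
  case: (eqVneq l i) => [->|li]; first by move=> *; lra.
  have := Htl _ _ ji; have := Htl _ _ li; rewrite !ler_norml.
  case: (eqVneq j l) => [->|jl]; first by move=> *; lra.
  have := Htl _ _ jl; rewrite !ler_norml => *; nra.
have Hnorm : enorm (thetaAdd - theta i) ^+ 2 <= 2 * C * (1 + eps).
  rewrite enorm2 {1}/dotv.
  under eq_bigr => k _ do rewrite Hent -expr2.
  rewrite (sq_sum_expand c (fun j => theta j - theta i)).
  apply: (@le_trans _ _ (\sum_(j < T) \sum_(l < T) c j * c l * (2 * C * (1 + eps)))).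
    apply: ler_sum => j _; apply: ler_sum => l _.
    by rewrite ler_wpM2l ?mulr_ge0 ?HD.
  rewrite (eq_bigr (fun j => c j * (2 * C * (1 + eps)))) ?c1.
    by rewrite -big_distrl /= c1 mul1r.
  move=> j _; rewrite -big_distrl -big_distrr /= c1; ring.
have Hsq : Num.sqrt C ^+ 2 = C by rewrite sqr_sqrtr // ltW.
have Hr2 : enorm (thetaAdd - theta i) <= r.
  have := sqrtr_ge0 C; have := sqrtr_ge0 (dotv (thetaAdd - theta i) (thetaAdd - theta i)).
  rewrite -/(enorm _) => n0 s0.
  move: Hnorm Hsq; nra.
have := Hsm i thetaAdd Hr2; rewrite Hd subr0 => H.
have := ler_norm (Loss i thetaAdd - Loss i (theta i)).
have := HL0 i; move: Hnorm H; nra.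
Qed.
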